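(* Let $G>I$ be a finite group with trivial center $Z(G)=I$ and let $\sigma_1,\sigma_2\in G$ with $G=\langle\sigma_1,\sigma_2\rangle$ and $o(\sigma_1\sigma_2)=2$. Then: (a) For $e_1=[\sigma_1,\sigma_1,\sigma_2,\sigma_1\sigma_2\sigma_1^{-1}]$ and $e_2=e_1^{\beta_{13}}$ we have $e_2=[\sigma_1,\sigma_2\sigma_1\sigma_2^{-1},\sigma_2,\sigma_2]$, and $Z_1=\{e_1,e_2\}$ is an orbit of length $2$ under $B_4$, on which $\beta_{12}$ fixes $e_1$ and $e_2$, $\beta_{13}$ and $\beta_{14}$ interchange $e_1$ and $e_2$, $\rho_4(B_4)\cong C_2$, and $g_{Z_1}=0$. (b) For $e_3=[\sigma_1,\sigma_2,\sigma_1,\sigma_2]$ and $e_4=e_3^{\beta_{12}}$ we have $e_4=[\sigma_1,\sigma_2,\sigma_2^{-1}\sigma_1\sigma_2,\sigma_1\sigma_2\sigma_1^{-1}]$, and $Z_2=\{e_3,e_4\}$ is an orbit of length $2$ under $B_4$, on which $\beta_{12}$ and $\beta_{14}$ interchange $e_3,e_4$, $\beta_{13}$ fixes $e_3$ and $e_4$, $\rho_4(B_4)\cong C_2$, and $g_{Z_2}=0$. (c) For $e_5=[\sigma_1,\sigma_2,\sigma_2,\sigma_2^{-1}\sigma_1\sigma_2]$ and $e_6=e_5^{\beta_{12}}$ we have $e_6=[\sigma_1,\sigma_2,\sigma_1\sigma_2\sigma_1^{-1},\sigma_1]$, and $Z_3=\{e_5,e_6\}$ is an orbit of length $2$ under $B_4$,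 on which $\beta_{12}$ and $\beta_{13}$ interchange $e_5,e_6$, $\beta_{14}$ fixes $e_5$ and $e_6$, $\rho_4(B_4)\cong C_2$, and $g_{Z_3}=0$.
   Context: $\iota$ denotes the identity of $G$ and $I$ the trivial group. For conjugacy classes $C_1,\dots,C_4$ of $G$, $\Sigma^i(C_1,\dots,C_4)$ is the set of $G$-conjugacy classes $[\sigma_1,\dots,\sigma_4]$ (under simultaneous conjugation) of tuples with $\sigma_j\in C_j$, $\langle\sigma_1,\dots,\sigma_4\rangle=G$, $\sigma_1\sigma_2\sigma_3\sigma_4=\iota$. The Hurwitz braid group $H_4=\langle\beta_2,\beta_3,\beta_4\rangle$ acts from the right by $[\underline{\sigma}]^{\beta_2}=[\sigma_1\sigma_2\sigma_1^{-1},\sigma_1,\sigma_3,\sigma_4]$, $[\underline{\sigma}]^{\beta_3}=[\sigma_1,\sigma_2\sigma_3\sigma_2^{-1},\sigma_2,\sigma_4]$, $[\underline{\sigma}]^{\beta_4}=[\sigma_1,\sigma_2,\sigma_3\sigma_4\sigma_3^{-1},\sigma_3]$. The pure braid group $B_4$ is generated by $\beta_{12}=\beta_2^2$, $\beta_{13}=\beta_2^{-1}\beta_3^2\beta_2$, $\beta_{14}=\beta_2^{-1}\beta_3^{-1}\beta_4^2\beta_3\beta_2$, $\beta_{23}=\beta_3^2$, $\beta_{24}=\beta_3^{-1}\beta_4^2\beta_3$, $\beta_{34}=\beta_4^2$ and preserves each $\Sigma^i(C_1,\dots,C_4)$; $\rho_4$ denotes the induced permutation representation. For a $B_4$-orbit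 $Z$, let $z_{1j}$ be the number of cycles (fixed points included) of $\rho_4(\beta_{1j})$ on $Z$; the genus is $g_Z=1-|Z|+\frac12(3|Z|-z_{12}-z_{13}-z_{14})$. *)

(* Defs.v *)
From mathcomp Require Import all_boot all_order all_algebra all_fingroup all_solvable.
Set Implicit Arguments. Unset Strict Implicit. Unset Printing Implicit Defensive.
Import GRing.Theory.

Local Open Scope group_scope.

Section Braid.
Variable gT : finGroupType.

Definition tup := (gT * gT * gT * gT)%type.

(* x ^ y = y^-1 * x * y in mathcomp, so  a b a^-1 = b ^ a^-1. *)
Inductive hletter := HB2 | HB3 | HB4 | HB2i | HB3i | HB4i.

Definition hact (l : hletter) (t : tup) : tup :=
  let '(a, b, c, d) := t in
  match l with
  | HB2 => (b ^ a^-1, a, c, d)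
  | HB3 => (a, c ^ b^-1, b, d)
  | HB4 => (a, b, d ^ c^-1, c)
  | HB2i => (b, a ^ b, c, d)
  | HB3i => (a, c, b ^ c, d)
  | HB4i => (a, b, d, c ^ d)
  end.

Definition linv (l : hletter) : hletter :=
  match l with
  | HB2 => HB2i | HB3 => HB3i | HB4 => HB4i
  | HB2i => HB2 | HB3i => HB3 | HB4i => HB4
  end.

(* right action of a word: the first letter acts first *)
Definition hact_word (w : seq hletter) (t : tup) : tup :=
  foldl (fun t l => hact l t) t w.

Definition inv_word (w : seq hletter) : seq hletter := rev (map linv w).

Definition beta12 : seq hletter := [:: HB2; HB2].
Definition beta13 : seq hletter := [:: HB2i; HB3; HB3; HB2].
Definition beta14 : seq hletter := [:: HB2i; HB3i; HB4; HB4; HB3; HB2].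
Definition beta23 : seq hletter := [:: HB3; HB3].
Definition beta24 : seq hletter := [:: HB3i; HB4; HB4; HB3].
Definition beta34 : seq hletter := [:: HB4; HB4].

Inductive pgen := P12 | P13 | P14 | P23 | P24 | P34.

Definition pgen_word (g : pgen) : seq hletter :=
  match g with
  | P12 => beta12 | P13 => beta13 | P14 => beta14
  | P23 => beta23 | P24 => beta24 | P34 => beta34
  end.

(* an element of the pure braid group B_4: a word in the beta_ij and their
   inverses (true = beta_ij, false = beta_ij^-1) *)
Definition pword (p : seq (pgen * bool)) : seq hletter :=
  flatten [seq (if x.2 then pgen_word x.1 else inv_word (pgen_word x.1)) | x <- p].

Definition conj4 (t : tup) (g : gT) : tup :=
  let '(a, b, c, d) := t in (a ^ g, b ^ g, c ^ g, d ^ g).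

Definition cls (G : {set gT}) (t : tup) : {set tup} := [set conj4 t g | g in G].

Definition cact (w : seq hletter) (X : {set tup}) : {set tup} := hact_word w @: X.

(* the tuple satisfies the defining conditions of Sigma^i: product-one and
   generation of G (the classes C_j are those of its entries) *)
Definition in_Sigma (G : {set gT}) (t : tup) : Prop :=
  let '(a, b, c, d) := t in a * b * c * d = 1 /\ <<[set a; b; c; d]>> = G.

Definition is_B4_orbit (Z : {set {set tup}}) (e : {set tup}) : Prop :=
  forall X, (exists p, cact (pword p) e = X) <-> X \in Z.

(* rho_4(B_4) restricted to {e, e'} is the group {id, swap} = C_2 *)
Definition rho_C2 (e e' : {set tup}) : Prop :=
  (forall p, (cact (pword p) e = e /\ cact (pword p) e' = e') \/
             (cact (pword p) e = e' /\ cact (pword p) e' = e)) /\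
  (exists p, cact (pword p) e = e' /\ cact (pword p) e' = e).

(* number of cycles (fixed points included) of beta_1j on Z *)
Definition zcyc (w : seq hletter) (Z : {set {set tup}}) : nat := fcard (cact w) (mem Z).

Definition genus (Z : {set {set tup}}) : rat :=
  (1 - (#|Z|)%:R + ((3 * #|Z|)%:R - (zcyc beta12 Z)%:R - (zcyc beta13 Z)%:R
                    - (zcyc beta14 Z)%:R) / 2)%R.

Definition fixes (w : seq hletter) (e : {set tup}) : Prop := cact w e = e.
Definition swaps (w : seq hletter) (e e' : {set tup}) : Prop :=
  cact w e = e' /\ cact w e' = e.

End Braid.

(* Main.v *)
Require Import Defs.
From mathcomp Require Import all_boot all_order all_algebra all_fingroup all_solvable.
Set Implicit Arguments. Unset Strict Implicit. Unset Printing Implicit Defensive.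
Local Open Scope group_scope.

Inductive lt := LA | LAi | LC.
Inductive gx := X1 | X2 | Xm of gx & gx | Xi of gx | Xj of gx & gx | X0.

Definition linvl l := match l with LA => LAi | LAi => LA | LC => LC end.
Definition winv (s : seq lt) := rev (map linvl s).
Fixpoint flat (x : gx) : seq lt :=
  match x with
  | X1 => [:: LA] | X2 => [:: LAi; LC]
  | Xm x y => flat x ++ flat y
  | Xi x => winv (flat x)
  | Xj x y => winv (flat y) ++ flat x ++ flat y
  | X0 => [::] end.
Definition canc l m := match l, m with
  | LA, LAi | LAi, LA | LC, LC => true | _, _ => false end.
Definition push l acc := match acc with
  | m :: r => if canc l m then r else l :: acc
  | [::] => [:: l] end.
Definition red (s : seq lt) := foldr push [::] s.
Definition lteq l m := match l, m with
  | LA, LA | LAi, LAi | LC, LC => true | _, _ => false end.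
Fixpoint lseq (s t : seq lt) := match s, t with
  | [::], [::] => true
  | l :: s, m :: t => lteq l m && lseq s t
  | _, _ => false end.
Lemma lseqP s t : lseq s t -> s = t.
Proof.
elim: s t => [|l s IH] [|m t] //= /andP[h /IH ->].
by case: l m h => [] [].
Qed.
Definition gxeq x y := lseq (red (flat x)) (red (flat y)).

Definition gx4 := (gx * gx * gx * gx)%type.
Definition hactx (l : hletter) (t : gx4) : gx4 :=
  let '(a, b, c, d) := t in
  match l with
  | HB2 => (Xj b (Xi a), a, c, d)
  | HB3 => (a, Xj c (Xi b), b, d)
  | HB4 => (a, b, Xj d (Xi c), c)
  | HB2i => (b, Xj a b, c, d)
  | HB3i => (a, c, Xj b c, d)
  | HB4i => (a, b, d, Xj c d)
  end.
Definition hwx (w : seq hletter) (t : gx4) : gx4 := foldl (fun t l => hactx l t) t w.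
Definition conj4x (t : gx4) (g : gx) : gx4 :=
  let '(a, b, c, d) := t in (Xj a g, Xj b g, Xj c g, Xj d g).
Definition eq4 (t u : gx4) : bool :=
  let '(a, b, c, d) := t in let '(a', b', c', d') := u in
  [&& gxeq a a', gxeq b b', gxeq c c' & gxeq d d'].
Definition chk w t u g := eq4 (hwx w t) (conj4x u g).

Section Interp.
Variables (gT : finGroupType) (s1 s2 : gT).
Hypothesis Hc : (s1 * s2) * (s1 * s2) = 1.

Fixpoint ix (x : gx) : gT :=
  match x with
  | X1 => s1 | X2 => s2 | Xm x y => ix x * ix y | Xi x => (ix x)^-1
  | Xj x y => ix x ^ ix y | X0 => 1 end.
Definition ilet l := match l with LA => s1 | LAi => s1^-1 | LC => s1 * s2 end.
Definition ilist (s : seq lt) := foldr (fun l acc => ilet l * acc) 1 s.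
Lemma ilist_cat s t : ilist (s ++ t) = ilist s * ilist t.
Proof. by elim: s => [|l s IH] /=; rewrite ?mul1g // IH mulgA. Qed.
Lemma ilist_inv s : ilist (winv s) = (ilist s)^-1.
Proof.
elim: s => [|l s IH]; first by rewrite /= invg1.
rewrite /winv /= rev_cons -cats1 ilist_cat -/(winv s) IH /= mulg1 invMg.
congr (_ * _); case: l => /=; rewrite ?invgK //.
by rewrite -[RHS]mulg1 -{1}Hc mulKg.
Qed.
Lemma flat_ok x : ilist (flat x) = ix x.
Proof.
elim: x => [||x IHx y IHy|x IHx|x IHx y IHy|] /=.
- by rewrite mulg1.
- by rewrite mulg1 mulKg.
- by rewrite ilist_cat IHx IHy.
- by rewrite ilist_inv IHx.
- by rewrite !ilist_cat ilist_inv IHx IHy conjgE mulgA.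
- by [].
Qed.
Lemma red_ok s : ilist (red s) = ilist s.
Proof.
elim: s => [|l s IH] //=; rewrite -IH /red /= -/(red s).
case: (red s) => [|m r] //=.
case: l m => [] [] //=; rewrite mulgA ?mulgV ?mulVg ?Hc ?mul1g //.
Qed.
Lemma gxeqP x y : gxeq x y -> ix x = ix y.
Proof. by move/lseqP=> h; rewrite -!flat_ok -red_ok h red_ok. Qed.

Definition i4 (t : gx4) : tup gT := let '(a, b, c, d) := t in (ix a, ix b, ix c, ix d).
Lemma hwx_ok w t : i4 (hwx w t) = hact_word w (i4 t).
Proof.
elim: w t => [|l w IH] t //=.
rewrite /hwx /= -/(hwx w _) IH; congr hact_word.
by case: t => [[[a b] c] d]; case: l.
Qed.
Lemma eq4P t u : eq4 t u -> i4 t = i4 u.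
Proof.
case: t => [[[a b] c] d]; case: u => [[[a' b'] c'] d'] /=.
by case/and4P=> /gxeqP-> /gxeqP-> /gxeqP-> /gxeqP->.
Qed.
Lemma chkP w t u g : chk w t u g -> hact_word w (i4 t) = conj4 (i4 u) (ix g).
Proof.
move/eq4P; rewrite hwx_ok => ->.
by case: u => [[[a b] c] d].
Qed.
End Interp.

Section Gen.
Variable gT : finGroupType.
Implicit Types (t : tup gT) (X : {set tup gT}).

Lemma hact_conj l t g : hact l (conj4 t g) = conj4 (hact l t) g.
Proof.
case: t => [[[a b] c] d]; case: l => /=; by rewrite ?(=^~conjVg, =^~conjJg).
Qed.
Lemma hw_conj w t g : hact_word w (conj4 t g) = conj4 (hact_word w t) g.
Proof. by elim: w t => [|l w IH] t //=; rewrite hact_conj IH. Qed.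
Lemma cact_cls (G : {set gT}) w t : cact w (cls G t) = cls G (hact_word w t).
Proof. by rewrite /cact /cls -imset_comp; apply: eq_imset => g /=; rewrite hw_conj. Qed.
Lemma conj4_mul t g h : conj4 (conj4 t g) h = conj4 t (g * h).
Proof. by case: t => [[[a b] c] d] /=; rewrite !conjgM. Qed.
Lemma cls_conj (G : {group gT}) t g : g \in G -> cls G (conj4 t g) = cls G t.
Proof.
move=> Gg; apply/setP => u; apply/imsetP/imsetP => [[h Gh ->]|[h Gh ->]].
  by exists (g * h); rewrite ?groupM // conj4_mul.
by exists (g^-1 * h); rewrite ?groupM ?groupV // conj4_mul mulKVg.
Qed.

Lemma hact_inv l t : hact (linv l) (hact l t) = t.
Proof.
case: t => [[[a b] c] d]; case: l => /=;
  by rewrite ?conjgK ?conjgKV ?invgK.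
Qed.
Lemma hw_inv w t : hact_word (inv_word w) (hact_word w t) = t.
Proof.
elim: w t => [|l w IH] t //=.
rewrite /inv_word /= rev_cons /hact_word foldl_rcons -/(hact_word _ _).
by rewrite -/(inv_word w) IH hact_inv.
Qed.
Lemma cact_inv w X : cact (inv_word w) (cact w X) = X.
Proof.
rewrite /cact -imset_comp (eq_imset _ (hw_inv w)); exact: imset_id.
Qed.
Lemma cact_inj w : injective (@cact gT w).
Proof. exact: can_inj (cact_inv w). Qed.
Lemma cact_cat w1 w2 X : cact (w1 ++ w2) X = cact w2 (cact w1 X).
Proof.
rewrite /cact -imset_comp; apply: eq_imset => t /=.
by rewrite /hact_word foldl_cat.
Qed.
Lemma cact_nil X : cact [::] X = X.
Proof. exact: imset_id. Qed.

Definition perm2 w X Y :=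
  (cact w X = X /\ cact w Y = Y) \/ (cact w X = Y /\ cact w Y = X).

Lemma perm2_inv w X Y : perm2 w X Y -> perm2 (inv_word w) X Y.
Proof.
case=> [[h1 h2]|[h1 h2]].
  by left; split; [rewrite -{1}h1 | rewrite -{1}h2]; apply: cact_inv.
by right; split; [rewrite -{1}h2 | rewrite -{1}h1]; apply: cact_inv.
Qed.
Lemma perm2_cat w1 w2 X Y : perm2 w1 X Y -> perm2 w2 X Y -> perm2 (w1 ++ w2) X Y.
Proof.
rewrite /perm2 !cact_cat.
by case=> [][-> ->]; case=> [][-> ->]; tauto.
Qed.
Lemma perm2_pword X Y : (forall g, perm2 (pgen_word g) X Y) ->
  forall p, perm2 (pword p) X Y.
Proof.
move=> H; elim=> [|[g b] p IH]; first by left; split; apply: cact_nil.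
rewrite /pword /= -/(pword p); apply: perm2_cat => //.
by case: b; [apply: H | apply: perm2_inv].
Qed.

Lemma orbit2P X Y p0 : (forall g, perm2 (pgen_word g) X Y) ->
  cact (pword p0) X = Y -> is_B4_orbit [set X; Y] X.
Proof.
move=> H H0 Z; split.
  by case=> p <-; case: (perm2_pword H p) => [][-> _]; rewrite !inE eqxx ?orbT.
rewrite !inE => /orP[]/eqP->; last by exists p0.
by exists [::]; rewrite cact_nil.
Qed.

Lemma rho2P X Y p0 : (forall g, perm2 (pgen_word g) X Y) ->
  cact (pword p0) X = Y -> cact (pword p0) Y = X -> rho_C2 X Y.
Proof.
move=> H h1 h2; split; last by exists p0.
exact: perm2_pword.
Qed.

Lemma zcyc_fix w X Y : X != Y -> cact w X = X -> cact w Y = Y ->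
  zcyc w [set X; Y] = 2%N.
Proof.
move=> nXY hX hY; rewrite /zcyc /n_comp_mem.
transitivity #|[set X; Y]|; last by rewrite cards2 nXY.
apply: eq_card => u; rewrite !inE.
suff rr (v : {set tup gT}) : cact w v = v -> froots (cact w) v.
  case/orP: (orbN ((u == X) || (u == Y))) => [/orP[]/eqP->|].
  - by rewrite rr ?eqxx.
  - by rewrite rr ?eqxx ?orbT.
  by move=> /negbTE->; rewrite andbF.
move=> hv; rewrite /fingraph.roots /=; apply/eqP.
have cl : closed (frel (cact w)) (pred1 v).
  by move=> a b /eqP <-; rewrite /= -{2}hv !inE (inj_eq (@cact_inj w)).
have := closed_connect cl (connect_root (frel (cact w)) v).
by rewrite !inE eqxx => /esym/eqP.
Qed.

Lemma zcyc_swap w X Y : X != Y -> cact w X = Y -> cact w Y = X ->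
  zcyc w [set X; Y] = 1%N.
Proof.
move=> nXY hX hY; rewrite /zcyc /n_comp_mem.
set e := frel (cact w).
have cl : closed e (mem [set X; Y]).
  move=> a b /eqP <-; rewrite !inE; apply/idP/idP.
    by case/orP=> /eqP->; rewrite ?hX ?hY eqxx ?orbT.
  case/orP=> /eqP h.
    have /cact_inj-> : cact w a = cact w Y by rewrite h hY.
    by rewrite eqxx orbT.
  have /cact_inj-> : cact w a = cact w X by rewrite h hX.
  by rewrite eqxx.
have cXY : connect e X Y by apply: connect1; rewrite /e /= hX.
have cYX : connect e Y X by apply: connect1; rewrite /e /= hY.
have eqr : fingraph.root e X = fingraph.root e Y.
  rewrite /fingraph.root (@eq_pick _ (connect e X) (connect e Y)) //.
    by case: pickP => //; move/(_ Y); rewrite connect0.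
  move=> z; apply/idP/idP => h; [exact: connect_trans cYX h | exact: connect_trans cXY h].
have rZ : fingraph.root e X \in [set X; Y].
  by rewrite -(closed_connect cl (connect_root _ X)) !inE eqxx.
transitivity #|pred1 (fingraph.root e X)|; last exact: card1.
apply: eq_card => u; rewrite !inE /fingraph.roots /=.
case: (eqVneq u X) => [->|nX] /=; first by rewrite andbT eq_sym.
case: (eqVneq u Y) => [->|nY] /=; first by rewrite andbT eqr eq_sym.
rewrite andbF; apply/esym/negbTE; apply: contraNneq nX => hu.
by move: rZ; rewrite -hu !inE (negbTE nY) orbF.
Qed.
End Gen.
Section Parts.
Variables (gT : finGroupType) (G : {group gT}) (s1 s2 : gT).
Hypothesis HG : <<[set s1; s2]>> = G.
Hypothesis Hc : (s1 * s2) * (s1 * s2) = 1.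

Lemma s1G : s1 \in G. Proof. by rewrite -HG mem_gen // !inE eqxx. Qed.
Lemma s2G : s2 \in G. Proof. by rewrite -HG mem_gen // !inE eqxx orbT. Qed.
Lemma ix_in x : ix s1 s2 x \in G.
Proof.
elim: x => /= [||x hx y hy|x hx|x hx y hy|];
  by rewrite ?s1G ?s2G ?groupM ?groupV ?groupJ ?group1.
Qed.
Lemma step w t u g : chk w t u g -> cact w (cls G (i4 s1 s2 t)) = cls G (i4 s1 s2 u).
Proof. by move/(chkP Hc)=> h; rewrite cact_cls h cls_conj ?ix_in. Qed.
Lemma perm2_fix w t u g1 g2 : chk w t t g1 -> chk w u u g2 ->
  perm2 w (cls G (i4 s1 s2 t)) (cls G (i4 s1 s2 u)).
Proof. by move=> /step h1 /step h2; left. Qed.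
Lemma perm2_swap w t u g1 g2 : chk w t u g1 -> chk w u t g2 ->
  perm2 w (cls G (i4 s1 s2 t)) (cls G (i4 s1 s2 u)).
Proof. by move=> /step h1 /step h2; right. Qed.
Definition t_a : gx4 := (X1, X1, X2, (Xj X2 (Xi X1))).
Definition u_a : gx4 := (X1, (Xj X1 (Xi X2)), X2, X2).
Lemma c0_a : chk beta13 t_a u_a (Xm (Xm (Xi X1) (Xm X1 X2)) (Xi X1)). Proof. by []. Qed.
Lemma perm_a pg : perm2 (pgen_word pg) (cls G (i4 s1 s2 t_a)) (cls G (i4 s1 s2 u_a)).
Proof.
case: pg.
- by apply: (perm2_fix (g1 := X0) (g2 := (Xm (Xm (Xm (Xi X1) (Xm X1 X2)) (Xi X1)) (Xm X1 X2)))).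
- by apply: (perm2_swap (g1 := (Xm (Xm (Xi X1) (Xm X1 X2)) (Xi X1))) (g2 := (Xm (Xm X1 (Xm X1 X2)) X1))).
- by apply: (perm2_swap (g1 := (Xm (Xi X1) (Xm X1 X2))) (g2 := (Xm (Xm X1 X2) X1))).
- by apply: (perm2_swap (g1 := (Xi X1)) (g2 := X1)).
- by apply: (perm2_swap (g1 := X0) (g2 := X0)).
- by apply: (perm2_fix (g1 := (Xm X1 X1)) (g2 := X0)).
Qed.
Definition t_b : gx4 := (X1, X2, X1, X2).
Definition u_b : gx4 := (X1, X2, (Xj X1 X2), (Xj X2 (Xi X1))).
Lemma c0_b : chk beta12 t_b u_b (Xm X1 X2). Proof. by []. Qed.
Lemma perm_b pg : perm2 (pgen_word pg) (cls G (i4 s1 s2 t_b)) (cls G (i4 s1 s2 u_b)).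
Proof.
case: pg.
- by apply: (perm2_swap (g1 := (Xm X1 X2)) (g2 := (Xm X1 X2))).
- by apply: (perm2_fix (g1 := (Xm (Xm (Xm (Xi X1) (Xm X1 X2)) (Xi X1)) (Xm X1 X2))) (g2 := X0)).
- by apply: (perm2_swap (g1 := (Xm (Xm X1 X2) X1)) (g2 := (Xm (Xi X1) (Xm X1 X2)))).
- by apply: (perm2_swap (g1 := X1) (g2 := (Xi X1))).
- by apply: (perm2_fix (g1 := (Xm X1 X1)) (g2 := X0)).
- by apply: (perm2_swap (g1 := X0) (g2 := X0)).
Qed.
Definition t_c : gx4 := (X1, X2, X2, (Xj X1 X2)).
Definition u_c : gx4 := (X1, X2, (Xj X2 (Xi X1)), X1).
Lemma c0_c : chk beta12 t_c u_c (Xm X1 X2). Proof. by []. Qed.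
Lemma perm_c pg : perm2 (pgen_word pg) (cls G (i4 s1 s2 t_c)) (cls G (i4 s1 s2 u_c)).
Proof.
case: pg.
- by apply: (perm2_swap (g1 := (Xm X1 X2)) (g2 := (Xm X1 X2))).
- by apply: (perm2_swap (g1 := (Xm (Xi X1) (Xm X1 X2))) (g2 := (Xm (Xm X1 X2) X1))).
- by apply: (perm2_fix (g1 := (Xm (Xm (Xm (Xi X1) (Xm X1 X2)) (Xi X1)) (Xm X1 X2))) (g2 := X0)).
- by apply: (perm2_fix (g1 := X0) (g2 := (Xm X1 X1))).
- by apply: (perm2_swap (g1 := X1) (g2 := (Xi X1))).
- by apply: (perm2_swap (g1 := X0) (g2 := X0)).
Qed.
Lemma fa12t : cact beta12 (cls G (i4 s1 s2 t_a)) = cls G (i4 s1 s2 t_a).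
Proof. by apply: (step (g := X0)). Qed.
Lemma fa12u : cact beta12 (cls G (i4 s1 s2 u_a)) = cls G (i4 s1 s2 u_a).
Proof. by apply: (step (g := (Xm (Xm (Xm (Xi X1) (Xm X1 X2)) (Xi X1)) (Xm X1 X2)))). Qed.
Lemma fa13t : cact beta13 (cls G (i4 s1 s2 t_a)) = cls G (i4 s1 s2 u_a).
Proof. by apply: (step (g := (Xm (Xm (Xi X1) (Xm X1 X2)) (Xi X1)))). Qed.
Lemma fa13u : cact beta13 (cls G (i4 s1 s2 u_a)) = cls G (i4 s1 s2 t_a).
Proof. by apply: (step (g := (Xm (Xm X1 (Xm X1 X2)) X1))). Qed.
Lemma fa14t : cact beta14 (cls G (i4 s1 s2 t_a)) = cls G (i4 s1 s2 u_a).
Proof. by apply: (step (g := (Xm (Xi X1) (Xm X1 X2)))). Qed.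
Lemma fa14u : cact beta14 (cls G (i4 s1 s2 u_a)) = cls G (i4 s1 s2 t_a).
Proof. by apply: (step (g := (Xm (Xm X1 X2) X1))). Qed.
Lemma fb12t : cact beta12 (cls G (i4 s1 s2 t_b)) = cls G (i4 s1 s2 u_b).
Proof. by apply: (step (g := (Xm X1 X2))). Qed.
Lemma fb12u : cact beta12 (cls G (i4 s1 s2 u_b)) = cls G (i4 s1 s2 t_b).
Proof. by apply: (step (g := (Xm X1 X2))). Qed.
Lemma fb13t : cact beta13 (cls G (i4 s1 s2 t_b)) = cls G (i4 s1 s2 t_b).
Proof. by apply: (step (g := (Xm (Xm (Xm (Xi X1) (Xm X1 X2)) (Xi X1)) (Xm X1 X2)))). Qed.
Lemma fb13u : cact beta13 (cls G (i4 s1 s2 u_b)) = cls G (i4 s1 s2 u_b).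
Proof. by apply: (step (g := X0)). Qed.
Lemma fb14t : cact beta14 (cls G (i4 s1 s2 t_b)) = cls G (i4 s1 s2 u_b).
Proof. by apply: (step (g := (Xm (Xm X1 X2) X1))). Qed.
Lemma fb14u : cact beta14 (cls G (i4 s1 s2 u_b)) = cls G (i4 s1 s2 t_b).
Proof. by apply: (step (g := (Xm (Xi X1) (Xm X1 X2)))). Qed.
Lemma fc12t : cact beta12 (cls G (i4 s1 s2 t_c)) = cls G (i4 s1 s2 u_c).
Proof. by apply: (step (g := (Xm X1 X2))). Qed.
Lemma fc12u : cact beta12 (cls G (i4 s1 s2 u_c)) = cls G (i4 s1 s2 t_c).
Proof. by apply: (step (g := (Xm X1 X2))). Qed.
Lemma fc13t : cact beta13 (cls G (i4 s1 s2 t_c)) = cls G (i4 s1 s2 u_c).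
Proof. by apply: (step (g := (Xm (Xi X1) (Xm X1 X2)))). Qed.
Lemma fc13u : cact beta13 (cls G (i4 s1 s2 u_c)) = cls G (i4 s1 s2 t_c).
Proof. by apply: (step (g := (Xm (Xm X1 X2) X1))). Qed.
Lemma fc14t : cact beta14 (cls G (i4 s1 s2 t_c)) = cls G (i4 s1 s2 t_c).
Proof. by apply: (step (g := (Xm (Xm (Xm (Xi X1) (Xm X1 X2)) (Xi X1)) (Xm X1 X2)))). Qed.
Lemma fc14u : cact beta14 (cls G (i4 s1 s2 u_c)) = cls G (i4 s1 s2 u_c).
Proof. by apply: (step (g := X0)). Qed.
Hypothesis ZG : 'Z(G) = 1.
Hypothesis nG : G :!=: 1.

Lemma fixc (x y : gT) : x = x ^ y -> commute x y.
Proof. by move=> h; apply/commgP/conjg_fixP; rewrite -h. Qed.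

Lemma triv_c x : x \in G -> commute x s1 -> commute x s2 -> x = 1.
Proof.
move=> Gx c1 c2; suff : x \in 'Z(G) by rewrite ZG => /set1P.
rewrite inE Gx /= -HG cent_gen.
by apply/centP => y; rewrite !inE => /orP[]/eqP->.
Qed.

Lemma noncomm : ~ commute s1 s2.
Proof.
move=> c12.
have e1 : s1 = 1 by apply: triv_c; rewrite ?s1G //.
have e2 : s2 = 1 by apply: triv_c; rewrite ?s2G //; apply: commute_sym.
move/negP: nG; apply; apply/eqP/trivgP.
rewrite -HG gen_subG; apply/subsetP => y; rewrite !inE => /orP[]/eqP->.
  by rewrite e1.
by rewrite e2.
Qed.

Lemma in_cls t : t \in cls G t.
Proof.
apply/imsetP; exists 1; first exact: group1.
by case: t => [[[a b] c] d] /=; rewrite !conjg1.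
Qed.

Lemma neq_a : cls G (i4 s1 s2 t_a) != cls G (i4 s1 s2 u_a).
Proof.
apply/negP => /eqP E; move: (in_cls (i4 s1 s2 u_a)); rewrite -E.
case/imsetP => g Gg [h1 h2 h3 h4].
have g1 : g = 1.
  apply: triv_c => //; [exact: commute_sym (fixc h1) | exact: commute_sym (fixc h3)].
move: h2; rewrite g1 conjg1 => h2.
have := commuteV (fixc (esym h2)); rewrite invgK.
exact: noncomm.
Qed.
Lemma neq_b : cls G (i4 s1 s2 t_b) != cls G (i4 s1 s2 u_b).
Proof.
apply/negP => /eqP E; move: (in_cls (i4 s1 s2 u_b)); rewrite -E.
case/imsetP => g Gg [h1 h2 h3 h4].
have g1 : g = 1.
  apply: triv_c => //; [exact: commute_sym (fixc h1) | exact: commute_sym (fixc h2)].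
move: h3; rewrite g1 conjg1 => h3.
exact: noncomm (fixc (esym h3)).
Qed.
Lemma neq_c : cls G (i4 s1 s2 t_c) != cls G (i4 s1 s2 u_c).
Proof.
apply/negP => /eqP E; move: (in_cls (i4 s1 s2 u_c)); rewrite -E.
case/imsetP => g Gg [h1 h2 h3 h4].
have g1 : g = 1.
  apply: triv_c => //; [exact: commute_sym (fixc h1) | exact: commute_sym (fixc h2)].
move: h3; rewrite g1 conjg1 => h3.
have := commuteV (fixc (esym h3)); rewrite invgK => h.
exact: noncomm (commute_sym h).
Qed.

Lemma sigma (a b c d : gx) : gxeq (Xm (Xm (Xm a b) c) d) X0 ->
  s1 \in [set ix s1 s2 a; ix s1 s2 b; ix s1 s2 c; ix s1 s2 d] ->
  s2 \in [set ix s1 s2 a; ix s1 s2 b; ix s1 s2 c; ix s1 s2 d] ->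
  in_Sigma G (ix s1 s2 a, ix s1 s2 b, ix s1 s2 c, ix s1 s2 d).
Proof.
move=> /(gxeqP Hc) /= h i1 i2; split => //.
apply/eqP; rewrite eqEsubset; apply/andP; split.
  rewrite gen_subG; apply/subsetP => y; rewrite !inE -!orbA.
  by case/or4P => /eqP->; apply: ix_in.
rewrite -{1}HG genS //; apply/subsetP => y /set2P[]->; [exact: i1 | exact: i2].
Qed.
Lemma partA :
  (let e1 := cls G (s1, s1, s2, s2 ^ s1^-1) in
   let e2 := cact beta13 e1 in
   let Z1 := [set e1; e2] in
   (e2 = cls G (s1, s1 ^ s2^-1, s2, s2) /\
       in_Sigma G (s1, s1, s2, s2 ^ s1^-1) /\
       #|Z1| = 2%N /\ is_B4_orbit Z1 e1 /\
       fixes beta12 e1 /\ fixes beta12 e2 /\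
       swaps beta13 e1 e2 /\ swaps beta14 e1 e2 /\
       rho_C2 e1 e2 /\ genus Z1 = 0%R)).
Proof.
move=> e1 e2 Z1.
have E1 : e1 = cls G (i4 s1 s2 t_a) by [].
have E2 : e2 = cls G (i4 s1 s2 u_a) by rewrite /e2 E1 fa13t.
have EZ : Z1 = [set cls G (i4 s1 s2 t_a); cls G (i4 s1 s2 u_a)] by rewrite /Z1 -E1 -E2.
have F : cls G (s1, s1 ^ s2^-1, s2, s2) = cls G (i4 s1 s2 u_a) by [].
have P0 : pword [:: (P13, true)] = beta13 by [].
rewrite F EZ E1 E2 /fixes /swaps.
split; first by [].
split; first by apply: (sigma (a := X1) (b := X1) (c := X2) (d := Xj X2 (Xi X1)));
  rewrite // !inE eqxx ?orbT.
split; first by rewrite cards2 neq_a.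
split; first by apply: (orbit2P (p0 := [:: (P13, true)]) perm_a); rewrite P0 fa13t.
split; first exact: fa12t.
split; first exact: fa12u.
split; first by rewrite fa13t fa13u.
split; first by rewrite fa14t fa14u.
split; first by apply: (rho2P (p0 := [:: (P13, true)]) perm_a); rewrite P0 ?fa13t ?fa13u.
rewrite /genus cards2 neq_a (zcyc_fix neq_a fa12t fa12u) (zcyc_swap neq_a fa13t fa13u).
by rewrite (zcyc_swap neq_a fa14t fa14u).
Qed.

Lemma partB :
  (let e3 := cls G (s1, s2, s1, s2) in
   let e4 := cact beta12 e3 in
   let Z2 := [set e3; e4] in
   (e4 = cls G (s1, s2, s1 ^ s2, s2 ^ s1^-1) /\
       in_Sigma G (s1, s2, s1, s2) /\
       #|Z2| = 2%N /\ is_B4_orbit Z2 e3 /\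
       swaps beta12 e3 e4 /\ swaps beta14 e3 e4 /\
       fixes beta13 e3 /\ fixes beta13 e4 /\
       rho_C2 e3 e4 /\ genus Z2 = 0%R)).
Proof.
move=> e1 e2 Z1.
have E1 : e1 = cls G (i4 s1 s2 t_b) by [].
have E2 : e2 = cls G (i4 s1 s2 u_b) by rewrite /e2 E1 fb12t.
have EZ : Z1 = [set cls G (i4 s1 s2 t_b); cls G (i4 s1 s2 u_b)] by rewrite /Z1 -E1 -E2.
have F : cls G (s1, s2, s1 ^ s2, s2 ^ s1^-1) = cls G (i4 s1 s2 u_b) by [].
have P0 : pword [:: (P12, true)] = beta12 by [].
rewrite F EZ E1 E2 /fixes /swaps.
split; first by [].
split; first by apply: (sigma (a := X1) (b := X2) (c := X1) (d := X2));
  rewrite // !inE eqxx ?orbT.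
split; first by rewrite cards2 neq_b.
split; first by apply: (orbit2P (p0 := [:: (P12, true)]) perm_b); rewrite P0 fb12t.
split; first by rewrite fb12t fb12u.
split; first by rewrite fb14t fb14u.
split; first exact: fb13t.
split; first exact: fb13u.
split; first by apply: (rho2P (p0 := [:: (P12, true)]) perm_b); rewrite P0 ?fb12t ?fb12u.
rewrite /genus cards2 neq_b (zcyc_swap neq_b fb12t fb12u) (zcyc_fix neq_b fb13t fb13u).
by rewrite (zcyc_swap neq_b fb14t fb14u).
Qed.

Lemma partC :
  (let e5 := cls G (s1, s2, s2, s1 ^ s2) in
   let e6 := cact beta12 e5 in
   let Z3 := [set e5; e6] in
   (e6 = cls G (s1, s2, s2 ^ s1^-1, s1) /\
       in_Sigma G (s1, s2, s2, s1 ^ s2) /\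
       #|Z3| = 2%N /\ is_B4_orbit Z3 e5 /\
       swaps beta12 e5 e6 /\ swaps beta13 e5 e6 /\
       fixes beta14 e5 /\ fixes beta14 e6 /\
       rho_C2 e5 e6 /\ genus Z3 = 0%R)).
Proof.
move=> e1 e2 Z1.
have E1 : e1 = cls G (i4 s1 s2 t_c) by [].
have E2 : e2 = cls G (i4 s1 s2 u_c) by rewrite /e2 E1 fc12t.
have EZ : Z1 = [set cls G (i4 s1 s2 t_c); cls G (i4 s1 s2 u_c)] by rewrite /Z1 -E1 -E2.
have F : cls G (s1, s2, s2 ^ s1^-1, s1) = cls G (i4 s1 s2 u_c) by [].
have P0 : pword [:: (P12, true)] = beta12 by [].
rewrite F EZ E1 E2 /fixes /swaps.
split; first by [].
split; first by apply: (sigma (a := X1) (b := X2) (c := X2) (d := Xj X1 X2));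
  rewrite // !inE eqxx ?orbT.
split; first by rewrite cards2 neq_c.
split; first by apply: (orbit2P (p0 := [:: (P12, true)]) perm_c); rewrite P0 fc12t.
split; first by rewrite fc12t fc12u.
split; first by rewrite fc13t fc13u.
split; first exact: fc14t.
split; first exact: fc14u.
split; first by apply: (rho2P (p0 := [:: (P12, true)]) perm_c); rewrite P0 ?fc12t ?fc12u.
rewrite /genus cards2 neq_c (zcyc_swap neq_c fc12t fc12u) (zcyc_swap neq_c fc13t fc13u).
by rewrite (zcyc_fix neq_c fc14t fc14u).
Qed.
End Parts.

Unset Implicit Arguments. Set Strict Implicit.

Theorem theorem2 (gT : finGroupType) (G : {group gT}) (s1 s2 : gT) :
  G :!=: 1 -> 'Z(G) = 1 ->
  <<[set s1; s2]>> = G -> #[s1 * s2]%g = 2%N ->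
  (* (a) *)
  (let e1 := cls G (s1, s1, s2, s2 ^ s1^-1) in
   let e2 := cact beta13 e1 in
   let Z1 := [set e1; e2] in
   (e2 = cls G (s1, s1 ^ s2^-1, s2, s2) /\
       in_Sigma G (s1, s1, s2, s2 ^ s1^-1) /\
       #|Z1| = 2%N /\ is_B4_orbit Z1 e1 /\
       fixes beta12 e1 /\ fixes beta12 e2 /\
       swaps beta13 e1 e2 /\ swaps beta14 e1 e2 /\
       rho_C2 e1 e2 /\ genus Z1 = 0%R)) /\
  (* (b) *)
  (let e3 := cls G (s1, s2, s1, s2) in
   let e4 := cact beta12 e3 in
   let Z2 := [set e3; e4] in
   (e4 = cls G (s1, s2, s1 ^ s2, s2 ^ s1^-1) /\
       in_Sigma G (s1, s2, s1, s2) /\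
       #|Z2| = 2%N /\ is_B4_orbit Z2 e3 /\
       swaps beta12 e3 e4 /\ swaps beta14 e3 e4 /\
       fixes beta13 e3 /\ fixes beta13 e4 /\
       rho_C2 e3 e4 /\ genus Z2 = 0%R)) /\
  (* (c) *)
  (let e5 := cls G (s1, s2, s2, s1 ^ s2) in
   let e6 := cact beta12 e5 in
   let Z3 := [set e5; e6] in
   (e6 = cls G (s1, s2, s2 ^ s1^-1, s1) /\
       in_Sigma G (s1, s2, s2, s1 ^ s2) /\
       #|Z3| = 2%N /\ is_B4_orbit Z3 e5 /\
       swaps beta12 e5 e6 /\ swaps beta13 e5 e6 /\
       fixes beta14 e5 /\ fixes beta14 e6 /\
       rho_C2 e5 e6 /\ genus Z3 = 0%R)).
Proof.
move=> nG ZG HG Ho.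
have Hc : (s1 * s2) * (s1 * s2) = 1.
  by have := expg_order (s1 * s2); rewrite Ho expgS expg1.
split; first exact: (partA HG Hc ZG nG).
split; first exact: (partB HG Hc ZG nG).
exact: (partC HG Hc ZG nG).
Qed.
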